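(* There exists an optimal threshold-type age-dependent policy $\phi^*$ of the MDP $\Lambda$ whose action order $(b_1,\dots,b_K)$ satisfies $Q_{b_k}\le Q_{b_{k+1}}$ for all $1\le k<K$; equivalently, $s\mapsto Q_{\phi^*(s)}$ is nondecreasing in the state $s$.
   Context: Fix $N\in\mathbb{N}^+$ vehicle types $\mathcal{N}=\{1,\dots,N\}$ with arrival probabilities $p_n\in(0,1]$, mean operational costs $c_n\ge0$ and mean sensing capabilities $r_n\in(0,1]$. Fix $\beta\in(0,1)$, $\epsilon>0$. Actions: $\mathcal{A}=2^{\mathcal{N}}$. Success probability $Q_\emptyset=0$, $Q_a=1-\prod_{n\in a}(1-r_np_n)$; expected recruitment cost $E_a=\sum_{n\in a}p_nc_n$. Immediate cost at state $\delta\in\mathbb{N}^+$: $u(\delta,a)=(1-\beta)E_a-\beta\epsilon\big(Q_a(\delta^2+2\delta)-(1+\delta)^2\big)$. MDP $\Lambda$: states $\mathbb{N}^+$; from state $s$ under action $a$ move to $1$ w.p. $Q_a$ and to $s+1$ w.p. $1-Q_a$; average cost $V(\phi)=\limsup_{T\to\infty}\frac1T\mathbb{E}^\phi[\sum_{t=1}^Tu(S(t),A(t))]$, $S(1)=1$, to be minimized. A threshold-type age-dependent policy is a deterministic stationary policy $\phi:\mathbb{N}^+\to\mathcal{A}$ for which there are $K\in\mathbb{N}^+$, an action order $(b_1,\dots,b_K)$ of actions with $b_k\ne b_{k+1}$, and integer thresholds $1\le\theta_{b_1\to b_2}\le\dots\le\theta_{b_{K-1}\to b_K}$ such that $\phi(s)=b_k$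 for $\theta_{b_{k-1}\to b_k}\le s<\theta_{b_k\to b_{k+1}}$ (with the conventions $\theta_{b_0\to b_1}=1$, $\theta_{b_K\to b_{K+1}}=\infty$). *)

(* Defs.v *)
From HB Require Import structures.
From mathcomp Require Import all_boot all_order all_algebra.
From mathcomp Require Import all_classical all_reals.
From mathcomp Require Import topology normedtype sequences.
Set Implicit Arguments. Unset Strict Implicit. Unset Printing Implicit Defensive.
Import Order.TTheory GRing.Theory Num.Theory.
Local Open Scope ring_scope.

Section Model.
Variables (R : realType) (N : nat) (p c r : 'I_N -> R) (beta eps : R).

(* Actions: subsets of the vehicle types {1..N}, represented by 'I_N. *)
Definition action := {set 'I_N}.

(* Success probability Q_a (empty product = 1, so Q_emptyset = 0). *)
Definition Qa (a : action) : R := 1 - \prod_(n in a) (1 - r n * p n).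

Definition Ea (a : action) : R := \sum_(n in a) p n * c n.

Definition ucost (d : nat) (a : action) : R :=
  (1 - beta) * Ea a
  - beta * eps * (Qa a * (d%:R ^+ 2 + 2 * d%:R) - (1 + d%:R) ^+ 2).

(* General (history-dependent, randomized) policy: given the history of past
   (state, action) pairs and the current state, a probability on actions. *)
Definition policy := seq (nat * action) -> nat -> action -> R.

Definition valid_policy (pi : policy) : Prop :=
  (forall h s a, 0 <= pi h s a) /\ (forall h s, \sum_(a : action) pi h s a = 1).

Fixpoint expcost (pi : policy) (T : nat) (h : seq (nat * action)) (s : nat) : R :=
  match T with
  | 0 => 0
  | T'.+1 => \sum_(a : action) pi h s a *
        (ucost s a + Qa a * expcost pi T' (rcons h (s, a)) 1
                   + (1 - Qa a) * expcost pi T' (rcons h (s, a)) s.+1)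
  end.

Definition avg_cost (pi : policy) : \bar R :=
  limn_esup (fun T : nat => ((expcost pi T [::] 1) / T%:R)%:E).

Definition det_policy (phi : nat -> action) : policy :=
  fun _ s a => (a == phi s)%:R.

Definition optimal (phi : nat -> action) : Prop :=
  forall pi : policy, valid_policy pi ->
    (avg_cost (det_policy phi) <= avg_cost pi)%E.

(* phi is threshold-type with action order (b 1, ..., b K) and thresholds
   theta k = theta_{b_k -> b_{k+1}} (1 <= k < K); conventions theta_{b_0->b_1} = 1,
   theta_{b_K -> b_{K+1}} = infinity.  Only states s >= 1 are constrained. *)
Definition threshold_type (phi : nat -> action) (K : nat) (b : nat -> action)
    (theta : nat -> nat) : Prop :=
  [/\ (0 < K)%N,
      (forall k, (1 <= k < K)%N -> b k != b k.+1),
      (1 < K)%N -> (1 <= theta 1)%N,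
      (forall k, (1 <= k)%N -> (k.+1 < K)%N -> (theta k <= theta k.+1)%N) &
      (forall s k, (1 <= s)%N -> (1 <= k <= K)%N ->
         (k == 1%N) || (theta k.-1 <= s)%N ->
         (k == K) || (s < theta k)%N ->
         phi s = b k)].

End Model.

(* Main.v *)
Require Import Defs.
From HB Require Import structures.
From mathcomp Require Import all_boot all_order all_algebra.
From mathcomp Require Import all_classical all_reals.
From mathcomp Require Import topology normedtype sequences ereal.
From mathcomp Require Import ring lra zify.
Import Order.TTheory GRing.Theory Num.Theory.
Local Open Scope ring_scope.
Set Implicit Arguments. Unset Strict Implicit.

Lemma thresh_gen (N' : nat) : forall M (f : nat -> action N'),
  (forall s, (M.+1 <= s)%N -> f s = f M.+1) ->
  exists K b theta, [/\ threshold_type f K b theta, b K = f M.+1,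
     (forall k, (1 <= k < K)%N -> (theta k <= M.+1)%N) &
     (forall k, (1 <= k < K)%N -> exists s s',
         [/\ (1 <= s)%N, (s < s')%N, (s' <= M.+1)%N, b k = f s & b k.+1 = f s'])].
Proof.
elim=> [|M IH] f hf.
  exists 1%N, (fun _ => f 1%N), (fun _ => 1%N); split => //.
  - split => //.
    + by move=> k hk; exfalso; lia.
    + by move=> s k hs _ _ _; exact: hf.
  - by move=> k hk; exfalso; lia.
case: (eqVneq (f M.+1) (f M.+2)) => hM.
  have hf' : forall s, (M.+1 <= s)%N -> f s = f M.+1.
    move=> s hs; case: (ltngtP s M.+1) => h; first by lia.
      by rewrite hf // hM.
    by rewrite h.
  have [K [b [theta [ht hb hth hp]]]] := IH f hf'.
  exists K, b, theta; split => //.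
  - by rewrite hb hM.
  - by move=> k hk; have := hth k hk; lia.
  - move=> k hk; have [s [s' [h1 h2 h3 h4 h5]]] := hp k hk.
    by exists s, s'; split => //; lia.
pose f' s := if (s <= M.+1)%N then f s else f M.+1.
have hf' : forall s, (M.+1 <= s)%N -> f' s = f' M.+1.
  move=> s hs; rewrite /f' leqnn; case: ifP => // h.
  by have -> : s = M.+1 by lia.
have [K [b [theta [[hK hbb hth1 hthm hphi] hb hthM hp]]]] := IH f' hf'.
have hbK : b K = f M.+1 by rewrite hb /f' leqnn.
exists K.+1, (fun k => if k == K.+1 then f M.+2 else b k),
  (fun k => if k == K then M.+2 else theta k); split.
- split; first by [].
  + move=> k /andP[h1 h2] /=.
    case: (eqVneq k K) => [->|hk].
      by rewrite eqxx ltn_eqF // hbK.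
    have -> : (k == K.+1) = false by apply/eqP; lia.
    have -> : (k.+1 == K.+1) = false by apply/eqP; lia.
    by apply: hbb; lia.
  + move=> h /=; case: (eqVneq 1%N K) => [_ //|h1].
    by apply: hth1; lia.
  + move=> k h1 h2 /=.
    have -> : (k == K) = false by apply/eqP; lia.
    case: (eqVneq k.+1 K) => [hk|hk].
      by have := hthM k; lia.
    by apply: hthm; lia.
  + move=> s k hs /andP[hk1 hk2] hlo hhi /=.
    case: (eqVneq k K.+1) => [hk|hk].
      subst k; move: hlo => /=; rewrite eqxx.
      have -> : (K.+1 == 1%N) = false by apply/eqP; lia.
      move=> /= hs2; exact: hf.
    case: (eqVneq k K) => [hkK|hkK].
      subst k; move: hhi; rewrite (negbTE hk) /= eqxx => hs2.
      have hsM : (s <= M.+1)%N by lia.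
      have hlo' : (K == 1%N) || (theta K.-1 <= s)%N.
        move: hlo; case: (eqVneq K 1%N) => [-> //|hK1] /=.
        by rewrite (_ : (K.-1 == K) = false) //; apply/eqP; lia.
      have hhi' : (K == K) || (s < theta K)%N by rewrite eqxx.
      have hKK : (1 <= K <= K)%N by apply/andP; split; lia.
      by have := hphi s K hs hKK hlo' hhi'; rewrite /f' hsM.
    move: hlo hhi; rewrite (negbTE hkK) (negbTE hk) /=.
    have -> : (k.-1 == K) = false by apply/eqP; lia.
    move=> hlo hhi.
    have hkK2 : (1 <= k < K)%N by lia.
    have hsM : (s <= M.+1)%N by have := hthM k hkK2; lia.
    have hkk : (1 <= k <= K)%N by lia.
    have hhi' : (k == K) || (s < theta k)%N by rewrite hhi orbT.
    by have := hphi s k hs hkk hlo hhi'; rewrite /f' hsM.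
- by rewrite eqxx.
- move=> k hk /=; case: (eqVneq k K) => [_ //|hkK].
  have hk2 : (1 <= k < K)%N by lia.
  by have := hthM k hk2; lia.
- move=> k /andP[h1 h2] /=.
  case: (eqVneq k K) => [->|hkK].
    exists M.+1, M.+2; split; [by []|by []|by []| |].
      by rewrite ltn_eqF // hbK.
    by rewrite eqxx.
  have hk2 : (1 <= k < K)%N by lia.
  have [s [s' [hs1 hs2 hs3 hs4 hs5]]] := hp k hk2.
  exists s, s'; split; [by []|by []|lia| |].
  + rewrite (_ : (k == K.+1) = false); last by apply/eqP; lia.
    by rewrite hs4 /f' (_ : (s <= M.+1)%N) //; lia.
  + rewrite (_ : (k.+1 == K.+1) = false); last by apply/eqP; lia.
    by rewrite hs5 /f' hs3.
Qed.

Section LimLemmas.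
Local Open Scope classical_set_scope.
Lemma Cdiv_le (R : realType) (C e : R) (n : nat) : 0 <= C -> 0 < e ->
  ((Num.truncn (C / e)).+1 <= n)%N -> C / n%:R <= e.
Proof.
move=> C0 e0 hn.
have hX := truncnS_gt (C / e).
have hn' : C / e < n%:R by apply: (lt_le_trans hX); rewrite ler_nat.
have n0 : (0 < n)%N by lia.
rewrite ler_pdivrMr ?ltr0n //.
move: hn'; rewrite ltr_pdivrMr // => h; rewrite mulrC; exact: ltW.
Qed.

Lemma esup_le (R : realType) (x : nat -> R) (g C : R) : 0 <= C ->
  (forall n, (0 < n)%N -> x n <= g + C / n%:R) ->
  (limn_esup (fun n => (x n)%:E) <= g%:E)%E.
Proof.
move=> C0 hx; apply/lee_addgt0Pr => e e0.
pose m := (Num.truncn (C / e)).+1.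
rewrite /limn_esup limf_esupE.
apply: (@le_trans _ _ (ereal_sup ((fun n => (x n)%:E) @` [set k | (m <= k)%N]))).
  apply: ereal_inf_lbound; exists [set k | (m <= k)%N] => //=; exists m => //.
apply: ge_ereal_sup => _ [n hn <-]; rewrite -EFinD lee_fin.
have n0 : (0 < n)%N by move: hn => /=; rewrite /m; lia.
apply: le_trans (hx n n0) _; rewrite lerD2l.
exact: Cdiv_le.
Qed.

Lemma esup_ge (R : realType) (y : nat -> R) (g C : R) : 0 <= C ->
  (forall n, (0 < n)%N -> g - C / n%:R <= y n) ->
  (g%:E <= limn_esup (fun n => (y n)%:E))%E.
Proof.
move=> C0 hy; rewrite /limn_esup limf_esupE; apply: le_ereal_inf_tmp => _ [A [m _ hA] <-].
apply/lee_subgt0Pr => e e0.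
pose n := maxn m (Num.truncn (C / e)).+1.
apply: le_ereal_sup_tmp; exists (y n)%:E.
  by exists n => //; apply: hA => /=; rewrite /n leq_maxl.
rewrite -EFinB lee_fin.
have n0 : (0 < n)%N by rewrite /n; lia.
apply: le_trans (hy n n0); apply: lerB; first exact: lexx.
by apply: Cdiv_le => //; rewrite /n leq_maxr.
Qed.

End LimLemmas.

Section Basic.
Variables (R : realType) (N : nat) (p c r : 'I_N -> R) (beta eps : R).
Hypotheses (N0 : (0 < N)%N) (hp : forall n, 0 < p n <= 1) (hc : forall n, 0 <= c n)
  (hr : forall n, 0 < r n <= 1) (hb : 0 < beta < 1) (he : 0 < eps).

Local Notation Q := (Qa p r).
Local Notation E := (Ea p c).
Local Notation u := (ucost p c r beta eps).

Lemma b0 : 0 < beta. Proof. by case/andP: hb. Qed.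
Lemma b1 : beta < 1. Proof. by case/andP: hb. Qed.
Lemma be_gt0 : 0 < beta * eps. Proof. exact: mulr_gt0 b0 he. Qed.
Lemma omb_gt0 : 0 < 1 - beta. Proof. by rewrite subr_gt0 b1. Qed.

Lemma Qswap a : Qa r p a = Q a.
Proof. by rewrite /Qa; congr (_ - _); apply: eq_bigr => n _; rewrite mulrC. Qed.

Definition full : action N := [set: 'I_N]%SET.

Lemma rp_gt0 n : 0 < r n * p n.
Proof. by have /andP[? _] := hr n; have /andP[? _] := hp n; exact: mulr_gt0. Qed.

Lemma rp_le1 n : r n * p n <= 1.
Proof.
have /andP[h1 h2] := hr n; have /andP[h3 h4] := hp n.
by rewrite mulr_ile1 // ltW.
Qed.

Lemma fac01 n : 0 <= 1 - r n * p n <= 1.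
Proof. have := rp_gt0 n; have := rp_le1 n; move=> *; apply/andP; split; lra. Qed.

Lemma prod_01 (a : action N) : 0 <= \prod_(n in a) (1 - r n * p n) <= 1.
Proof.
apply/andP; split; first by apply: prodr_ge0 => n _; have /andP[] := fac01 n.
by apply: prodr_ile1 => n _; exact: fac01.
Qed.

Lemma Q_ge0 a : 0 <= Q a.
Proof. rewrite /Qa subr_ge0; have /andP[_ h] := prod_01 a; exact: h. Qed.

Lemma Q_le1 a : Q a <= 1.
Proof. rewrite /Qa gerBl; have /andP[h _] := prod_01 a; exact: h. Qed.

Lemma Q_le_max a : Q a <= Q full.
Proof.
rewrite /Qa /full; apply: lerB; first exact: lexx.
rewrite (bigID (fun n => n \in a)) /=.
have -> : \prod_(i in full | i \in a) (1 - r i * p i) =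
          \prod_(i in a) (1 - r i * p i).
  by apply: eq_bigl => i; rewrite !inE.
have /andP[h1 _] := prod_01 a.
rewrite ler_piMr //.
by apply: prodr_ile1 => n _; exact: fac01.
Qed.

Lemma Qmax_gt0 : 0 < Q full.
Proof.
pose n0 : 'I_N := Ordinal N0.
have h : Q [set n0] = r n0 * p n0 by rewrite /Qa big_set1; ring.
have := Q_le_max [set n0]; rewrite h => h2.
have := rp_gt0 n0; lra.
Qed.

Lemma E_ge0 a : 0 <= E a.
Proof.
apply: sumr_ge0 => n _; have /andP[h1 _] := hp n; apply: mulr_ge0 => //; exact: ltW.
Qed.

Lemma E_le_max a : E a <= E full.
Proof.
rewrite /Ea /full [X in _ <= X](bigID (fun n => n \in a)) /=.
have -> : \sum_(i in [set: 'I_N]%SET | i \in a) p i * c i = \sum_(i in a) p i * c i.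
  by apply: eq_bigl => i; rewrite !inE.
rewrite lerDl; apply: sumr_ge0 => n _; have /andP[h1 _] := hp n; apply: mulr_ge0 => //; exact: ltW.
Qed.

Lemma uE s a : u s a = (1 - beta) * E a + beta * eps * ((1 - Q a) * (1 + s%:R) ^+ 2 + Q a).
Proof. rewrite /ucost; ring. Qed.

Lemma u_lb s a : beta * eps * ((1 - Q a) * (1 + s%:R) ^+ 2) <= u s a.
Proof.
rewrite -subr_ge0.
have -> : u s a - beta * eps * ((1 - Q a) * (1 + s%:R) ^+ 2) =
   (1 - beta) * E a + beta * eps * Q a by rewrite uE; ring.
have := E_ge0 a; have := Q_ge0 a; have /andP[b0 b1] := hb.
move=> q0 e0; have be : 0 <= beta * eps by apply: mulr_ge0; apply: ltW.
apply: addr_ge0; apply: mulr_ge0 => //; lra.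
Qed.

Lemma u_ge0 s a : 0 <= u s a.
Proof.
apply: le_trans (u_lb s a); apply: mulr_ge0; first exact: ltW be_gt0.
apply: mulr_ge0; last exact: sqr_ge0.
by rewrite subr_ge0 Q_le1.
Qed.

Lemma u_mono s a : u s a <= u s.+1 a.
Proof.
rewrite !uE lerD2l; apply: ler_wpM2l; first exact: ltW be_gt0.
rewrite lerD2r; apply: ler_wpM2l; first by rewrite subr_ge0 Q_le1.
rewrite -natr1; have h : 0 <= s%:R :> R by []. nra.
Qed.


Definition key (L : R) (a : action N) : R := (1 - beta) * E a - Q a * L.

Definition sel (L : R) : action N := [arg min_(a < full) key L a]%O.

Lemma selP L a : key L (sel L) <= key L a.
Proof.
rewrite /sel; case: (@arg_minP _ _ _ full predT (key L)) => // i _ h.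
exact: h.
Qed.

Definition w (s : nat) : R := s%:R ^+ 2 + 2 * s%:R.

Lemma keyE s a g v :
  u s a - g + (1 - Q a) * v =
  key (beta * eps * w s + v) a + (beta * eps * (1 + s%:R) ^+ 2 - g + v).
Proof. rewrite /ucost /key /w; ring. Qed.

Definition mn (s : nat) (g v : R) : R :=
  let a := sel (beta * eps * w s + v) in u s a - g + (1 - Q a) * v.

Lemma mn_le s g v a : mn s g v <= u s a - g + (1 - Q a) * v.
Proof. by rewrite /mn !keyE lerD2r selP. Qed.

Lemma sel_mono L L' : L < L' -> Q (sel L) <= Q (sel L').
Proof.
move=> LL'.
have h1 := selP L (sel L'); have h2 := selP L' (sel L).
move: h1 h2; rewrite /key.
set qa := Q (sel L); set qb := Q (sel L'); set ea := E (sel L); set eb := E (sel L').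
move=> h1 h2.
rewrite leNgt; apply/negP => hq.
have : 0 < (qa - qb) * (L' - L) by apply: mulr_gt0; rewrite subr_gt0.
nra.
Qed.

Lemma Q_pos_full : 0 < Q full. Proof. exact: Qmax_gt0. Qed.

Definition gap (a : action N) : R := if Q a < Q full then Q full - Q a else 1.
Definition delta : R := gap [arg min_(a < full) gap a]%O.

Lemma delta_gt0 : 0 < delta.
Proof.
rewrite /delta /gap; case: ifP => //; by rewrite subr_gt0.
Qed.

Lemma delta_le a : Q a < Q full -> delta <= Q full - Q a.
Proof.
move=> h; rewrite /delta; case: (@arg_minP _ _ _ full predT gap) => // i _ hi.
by have := hi a isT; rewrite {2}/gap h.
Qed.

Definition lam0 : R := (1 - beta) * E full / delta + 1.

Lemma lam0_gt0 : 0 < lam0.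
Proof.
rewrite /lam0; apply: ltr_wpDl; last exact: ltr01.
apply: divr_ge0; last exact: ltW delta_gt0.
by apply: mulr_ge0; [exact: ltW omb_gt0|exact: E_ge0].
Qed.

Lemma delta_lam0 : (1 - beta) * E full < delta * lam0.
Proof.
rewrite /lam0 mulrDr mulr1 [delta * _]mulrC divfK; last by rewrite gt_eqF // delta_gt0.
by rewrite ltrDl delta_gt0.
Qed.

Lemma big_gap L a : lam0 <= L -> Q a < Q full ->
  (1 - beta) * E full < (Q full - Q a) * L.
Proof.
move=> hL hq; apply: (lt_le_trans delta_lam0).
apply: ler_pM => //; [exact: ltW delta_gt0|exact: ltW lam0_gt0|exact: delta_le].
Qed.

Lemma sel_big L : lam0 <= L -> Q (sel L) = Q full.
Proof.
move=> hL; apply/eqP; rewrite eq_le Q_le_max /=.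
rewrite leNgt; apply/negP => hq.
have h := selP L full; move: h; rewrite /key.
have := big_gap hL hq; have := E_ge0 (sel L); have := E_le_max (sel L).
have := omb_gt0.
set qa := Q (sel L); set qf := Q full; set ea := E (sel L); set ef := E full.
move=> h0 h1 h2 h3 h4.
have : (1 - beta) * ea >= 0 by apply: mulr_ge0 => //; exact: ltW.
nra.
Qed.

Definition at_ : action N := sel lam0.

Lemma Q_at : Q at_ = Q full.
Proof. by apply: sel_big; exact: lexx. Qed.

Lemma at_opt L b : lam0 <= L -> key L at_ <= key L b.
Proof.
move=> hL; rewrite /key Q_at.
have := selP lam0 b; rewrite /key -/at_ Q_at => hk.
have hbq := Q_le_max b.
have hE : (1 - beta) * E at_ <= (1 - beta) * E full.
  by apply: ler_wpM2l; [exact: ltW omb_gt0|exact: E_le_max].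
have hE0 : 0 <= (1 - beta) * E b.
  by apply: mulr_ge0; [exact: ltW omb_gt0|exact: E_ge0].
case: (ltrP (Q b) (Q full)) => hq.
  have := big_gap hL hq.
  move=> hg. nra.
have -> : Q b = Q full by apply/eqP; rewrite eq_le hq hbq.
move: hk; rewrite (_ : Q b = Q full); last by apply/eqP; rewrite eq_le hq hbq.
lra.
Qed.

Definition Bc : R := beta * eps * (1 - Q full).
Definition Ac : R := (1 - beta) * E at_ + beta * eps * Q full.
Definition xc : R := Bc / Q full.
Definition yc : R := (2 * Bc + 2 * (1 - Q full) * xc) / Q full.
Definition zc (g : R) : R := (Ac + Bc - g + (1 - Q full) * (xc + yc)) / Q full.
Definition tail (g : R) (s : nat) : R := xc * s%:R ^+ 2 + yc * s%:R + zc g.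

Lemma qneq0 : Q full != 0. Proof. by rewrite gt_eqF // Qmax_gt0. Qed.
Lemma omq_ge0 : 0 <= 1 - Q full. Proof. by rewrite subr_ge0 Q_le1. Qed.

Lemma u_at s : u s at_ = Ac + Bc * (1 + s%:R) ^+ 2.
Proof. rewrite uE Q_at /Ac /Bc; ring. Qed.

Lemma tail_eq g s : tail g s = u s at_ - g + (1 - Q full) * tail g s.+1.
Proof.
rewrite u_at /tail /zc /yc /xc -natr1.
by field; exact: qneq0.
Qed.

Lemma tail_shift g s : tail g s = tail 0 s - g / Q full.
Proof. rewrite /tail /zc; field; exact: qneq0. Qed.

Lemma Bc_ge0 : 0 <= Bc.
Proof. by apply: mulr_ge0; [exact: ltW be_gt0|exact: omq_ge0]. Qed.
Lemma Ac_ge0 : 0 <= Ac.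
Proof.
apply: addr_ge0; apply: mulr_ge0; try exact: ltW be_gt0; try exact: Q_ge0.
  exact: ltW omb_gt0.
exact: E_ge0.
Qed.
Lemma iq_ge0 : 0 <= (Q full)^-1. Proof. by rewrite invr_ge0 ltW // Qmax_gt0. Qed.
Lemma xc_ge0 : 0 <= xc. Proof. exact: mulr_ge0 Bc_ge0 iq_ge0. Qed.
Lemma yc_ge0 : 0 <= yc.
Proof.
apply: mulr_ge0 iq_ge0; apply: addr_ge0; first by apply: mulr_ge0 => //; exact: Bc_ge0.
apply: mulr_ge0; last exact: xc_ge0.
by apply: mulr_ge0 => //; exact: omq_ge0.
Qed.
Lemma zc0_ge0 : 0 <= zc 0.
Proof.
apply: mulr_ge0 iq_ge0; rewrite subr0; apply: addr_ge0; first exact: addr_ge0 Ac_ge0 Bc_ge0.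
by apply: mulr_ge0; [exact: omq_ge0|exact: addr_ge0 xc_ge0 yc_ge0].
Qed.

Lemma tail0_ge0 s : 0 <= tail 0 s.
Proof.
rewrite /tail; apply: addr_ge0; last exact: zc0_ge0.
apply: addr_ge0; apply: mulr_ge0; try exact: xc_ge0; try exact: yc_ge0; try exact: sqr_ge0.
by [].
Qed.

Lemma tail_mono g s : tail g s <= tail g s.+1.
Proof.
rewrite /tail -natr1 lerD2r.
have := xc_ge0; have := yc_ge0; have : 0 <= s%:R :> R by []. nra.
Qed.

Lemma tail_le g s : tail g s <= (xc + yc) * s%:R ^+ 2 + zc g.
Proof.
rewrite /tail lerD2r mulrDl lerD2l; apply: ler_wpM2l; first exact: yc_ge0.
rewrite -natrX ler_nat; by case: s => // s; rewrite expnS expn1 leq_pmulr.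
Qed.

Definition G : R := Q full * tail 0 1.

Definition Mb : nat := (Num.truncn ((lam0 + G / Q full) / (beta * eps))).+1.

Lemma M_big s g : (Mb <= s)%N -> 0 <= g -> g <= G ->
  lam0 <= beta * eps * w s + tail g s.+1.
Proof.
move=> hs g0 gG.
set X := (lam0 + G / Q full) / (beta * eps).
have hX : X < Mb%:R by exact: truncnS_gt.
have hXs : X < s%:R by apply: (lt_le_trans hX); rewrite ler_nat.
have hbeX : beta * eps * X = lam0 + G / Q full.
  by rewrite /X mulrC divfK // gt_eqF // be_gt0.
have h1 : beta * eps * X <= beta * eps * s%:R by apply: ler_wpM2l; [exact: ltW be_gt0|exact: ltW].
have h2 : s%:R <= w s :> R.
  rewrite /w; have : 0 <= s%:R :> R by []. nra.
have h3 : beta * eps * s%:R <= beta * eps * w s by apply: ler_wpM2l; [exact: ltW be_gt0|].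
have h4 : g / Q full <= G / Q full by apply: ler_wpM2r; [exact: iq_ge0|].
have h5 := tail0_ge0 s.+1.
rewrite tail_shift. lra.
Qed.

Fixpoint Vr (g : R) (k s : nat) {struct k} : R :=
  if k is k'.+1 then mn s g (Vr g k' s.+1) else tail g s.

Definition V (g : R) (s : nat) : R := Vr g (Mb - s) s.

Lemma V_lt g s : (s < Mb)%N -> V g s = mn s g (V g s.+1).
Proof. by move=> h; rewrite /V -subnSK. Qed.

Lemma V_ge g s : (Mb <= s)%N -> V g s = tail g s.
Proof. by move=> h; rewrite /V (eqP (_ : Mb - s == 0)%N) // subn_eq0. Qed.

Lemma mn_lip s g g' v v' d : g <= g' -> v' <= v -> v - v' <= d ->
  0 <= mn s g v - mn s g' v' <= (g' - g) + d.
Proof.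
move=> hg hv hd; apply/andP; split.
  have := mn_le s g' v' (sel (beta * eps * w s + v)).
  rewrite /mn /=.
  set a := sel (beta * eps * w s + v).
  have := Q_le1 a => hq1 h.
  have : (1 - Q a) * v' <= (1 - Q a) * v by apply: ler_wpM2l => //; rewrite subr_ge0.
  lra.
have := mn_le s g v (sel (beta * eps * w s + v')).
rewrite /mn /=.
set b := sel (beta * eps * w s + v').
have := Q_le1 b; have := Q_ge0 b => hq0 hq1 h.
have : (1 - Q b) * (v - v') <= v - v' by rewrite ler_piMl // ?subr_ge0 //; lra.
lra.
Qed.

Definition Lc : R := Mb%:R + (Q full)^-1.

Lemma Vr_lip g g' k s : g <= g' ->
  0 <= Vr g k s - Vr g' k s <= (g' - g) * (k%:R + (Q full)^-1).
Proof.
move=> hg; elim: k s => [|k IH] s /=.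
  rewrite (tail_shift g) (tail_shift g') add0r.
  have -> : tail 0 s - g / Q full - (tail 0 s - g' / Q full) = (g' - g) * (Q full)^-1 by ring.
  rewrite lexx andbT; apply: mulr_ge0 iq_ge0; by rewrite subr_ge0.
have /andP[h1 h2] := IH s.+1.
have hv : Vr g' k s.+1 <= Vr g k s.+1 by rewrite -subr_ge0.
have /andP[h3 h4] := @mn_lip s g g' _ _ _ hg hv h2.
apply/andP; split => //; apply: le_trans h4 _; rewrite -natr1.
rewrite le_eqVlt; apply/orP; left; apply/eqP; ring.
Qed.

Lemma V_lip g g' s : g <= g' -> 0 <= V g s - V g' s <= (g' - g) * Lc.
Proof.
move=> hg; have /andP[h1 h2] := Vr_lip (Mb - s) s hg.
apply/andP; split => //; apply: le_trans h2 _; apply: ler_wpM2l; first by rewrite subr_ge0.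
by rewrite /Lc lerD2r ler_nat leq_subr.
Qed.

Lemma Lc_gt0 : 0 < Lc.
Proof. by rewrite /Lc ltr_wpDl // invr_gt0 Qmax_gt0. Qed.

Lemma V_le_tail g s : V g s <= tail g s.
Proof.
rewrite /V; move: (Mb - s)%N => k; elim: k s => [|k IH] s /=; first exact: lexx.
apply: le_trans (mn_le s g _ at_) _.
rewrite [X in _ <= X]tail_eq Q_at lerD2l; apply: ler_wpM2l; first exact: omq_ge0.
exact: IH.
Qed.

Lemma V0_ge0 s : 0 <= V 0 s.
Proof.
rewrite /V; move: (Mb - s)%N => k; elim: k s => [|k IH] s /=; first exact: tail0_ge0.
rewrite /mn /= subr0; apply: addr_ge0; first exact: u_ge0.
apply: mulr_ge0; last exact: IH.
by rewrite subr_ge0 Q_le1.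
Qed.

Definition Sg : set R := [set g : R | 0 <= V g 1%N]%classic.

Lemma Sg0 : Sg 0. Proof. exact: V0_ge0. Qed.

Lemma Sg_ub g : Sg g -> g <= G.
Proof.
rewrite /Sg /= => h.
have := V_le_tail g 1; rewrite tail_shift => h2.
have h3 : g / Q full <= tail 0 1 by lra.
by move: h3; rewrite ler_pdivrMr ?Qmax_gt0 // /G mulrC.
Qed.

Lemma hasSg : has_sup Sg.
Proof. split; first by exists 0; exact: Sg0. by exists G => g; exact: Sg_ub. Qed.

Definition gs : R := sup Sg.

Lemma gs_ge0 : 0 <= gs. Proof. exact: (sup_upper_bound hasSg) Sg0. Qed.
Lemma gs_leG : gs <= G.
Proof. apply: ge_sup; first by exists 0; exact: Sg0. by move=> g; exact: Sg_ub. Qed.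

Lemma V_gs1 : V gs 1%N = 0.
Proof.
apply/eqP; rewrite eq_le; apply/andP; split; last first.
  rewrite leNgt; apply/negP => hneg.
  have e0 : 0 < - V gs 1%N / Lc by rewrite divr_gt0 ?Lc_gt0 // oppr_gt0.
  have [g0 Sg0' hg0] := sup_adherent e0 hasSg.
  have g0le : g0 <= gs by exact: (sup_upper_bound hasSg).
  have /andP[_ h] := V_lip 1 g0le.
  have : (gs - g0) * Lc < (- V gs 1%N / Lc) * Lc.
    by rewrite ltr_pM2r ?Lc_gt0 //; move: hg0; rewrite -/gs; lra.
  rewrite divfK ?gt_eqF ?Lc_gt0 // => h2.
  move: Sg0'; rewrite /Sg /= => h3; lra.
rewrite leNgt; apply/negP => hpos.
set g1 := gs + V gs 1%N / Lc.
have hle : gs <= g1 by rewrite /g1 lerDl divr_ge0 // ?ltW // Lc_gt0.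
have /andP[_ h] := V_lip 1 hle.
have hh : (g1 - gs) * Lc = V gs 1%N by rewrite /g1 addrC addKr divfK // gt_eqF // Lc_gt0.
have Sg1 : Sg g1 by rewrite /Sg /=; lra.
have := (sup_upper_bound hasSg) g1 Sg1; rewrite -/gs /g1 gerDl.
by rewrite leNgt divr_gt0 // Lc_gt0.
Qed.

Definition Vs : nat -> R := V gs.
Definition Lam (s : nat) : R := beta * eps * w s + Vs s.+1.
Definition phi (s : nat) : action N := if (s < Mb)%N then sel (Lam s) else at_.

Lemma acoeE s : Vs s = u s (phi s) - gs + (1 - Q (phi s)) * Vs s.+1.
Proof.
rewrite /phi; case: ifP => hs; first by rewrite /Vs V_lt.
have h1 : (Mb <= s)%N by rewrite leqNgt hs.
by rewrite /Vs !V_ge ?(leq_trans h1) // tail_eq Q_at.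
Qed.

Lemma acoeI s a : Vs s <= u s a - gs + (1 - Q a) * Vs s.+1.
Proof.
case: (ltnP s Mb) => hs; first by rewrite /Vs V_lt //; exact: mn_le.
have -> : Vs s = u s at_ - gs + (1 - Q at_) * Vs s.+1.
  by rewrite /Vs !V_ge ?(leq_trans hs) // tail_eq Q_at.
rewrite !keyE lerD2r; apply: at_opt.
rewrite /Vs V_ge ?(leq_trans hs) //; apply: M_big => //; [exact: gs_ge0|exact: gs_leG].
Qed.

Lemma Vs_mono s : Vs s <= Vs s.+1.
Proof.
have : (Mb - s <= Mb - s)%N by [].
move: {2}(Mb - s)%N => k; elim: k s => [|k IH] s hk.
  have hs : (Mb <= s)%N by rewrite -subn_eq0 -leqn0.
  by rewrite /Vs !V_ge ?(leq_trans hs) //; exact: tail_mono.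
have hk' : (Mb - s.+1 <= k)%N by lia.
apply: le_trans (acoeI s (phi s.+1)) _.
rewrite [X in _ <= X]acoeE; apply: lerD; first by rewrite lerD2r u_mono.
apply: ler_wpM2l; first by rewrite subr_ge0 Q_le1.
exact: IH.
Qed.

Lemma Vs_ge s : Vs 0 <= Vs s.
Proof. elim: s => [|s IH]; first exact: lexx. exact: le_trans IH (Vs_mono s). Qed.

Lemma Vs1 : Vs 1%N = 0. Proof. exact: V_gs1. Qed.

Lemma w_mono s : w s <= w s.+1.
Proof. rewrite /w -natr1; have : 0 <= s%:R :> R by []. nra. Qed.

Lemma Lam_mono s : Lam s <= Lam s.+1.
Proof.
rewrite /Lam; apply: lerD; last exact: Vs_mono.
by apply: ler_wpM2l; [exact: ltW be_gt0|exact: w_mono].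
Qed.

Lemma phiQ_step s : Q (phi s) <= Q (phi s.+1).
Proof.
rewrite /phi; case: (ltnP s.+1 Mb) => h1.
  rewrite (ltn_trans (ltnSn s) h1).
  have := Lam_mono s; rewrite le_eqVlt => /orP[/eqP -> //|]; exact: sel_mono.
case: ifP => _; last exact: lexx.
by rewrite Q_at Q_le_max.
Qed.

Lemma phiQ_mono s s' : (s <= s')%N -> Q (phi s) <= Q (phi s').
Proof.
move=> h.
have := @homo_leq _ (fun s => Q (phi s)) (fun x y : R => x <= y) (fun x => lexx x)
  (fun y x z => @le_trans _ _ y x z) phiQ_step.
by move=> /(_ s s' h).
Qed.

Lemma phi_const s : (Mb <= s)%N -> phi s = phi Mb.
Proof. by move=> h; rewrite /phi ltnn ltnNge h. Qed.

Local Notation ec := (expcost p c r beta eps).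

Lemma sum_ind (x : action N) (F : action N -> R) :
  \sum_(a : action N) (a == x)%:R * F a = F x.
Proof.
rewrite (bigD1 x) //= eqxx mul1r big1 ?addr0 // => a /negbTE ->.
by rewrite mul0r.
Qed.

Lemma UB (f : nat -> action N) (k : nat -> R) (g kmin : R) :
  (forall s, u s (f s) + Q (f s) * k 1%N + (1 - Q (f s)) * k s.+1 <= k s + g) ->
  (forall s, kmin <= k s) ->
  forall T hist s, ec (det_policy R f) T hist s <= T%:R * g + k s - kmin.
Proof.
move=> hk hmin; elim => [|T IH] hist s /=.
  by rewrite mul0r add0r subr_ge0.
rewrite /det_policy sum_ind.
have h1 := IH (rcons hist (s, f s)) 1%N.
have h2 := IH (rcons hist (s, f s)) s.+1.
have q0 := Q_ge0 (f s); have q1 := Q_le1 (f s).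
have h3 : Q (f s) * ec (det_policy R f) T (rcons hist (s, f s)) 1
          <= Q (f s) * (T%:R * g + k 1%N - kmin) by exact: ler_wpM2l.
have h4 : (1 - Q (f s)) * ec (det_policy R f) T (rcons hist (s, f s)) s.+1
          <= (1 - Q (f s)) * (T%:R * g + k s.+1 - kmin) by apply: ler_wpM2l => //; lra.
have := hk s; rewrite -natr1. nra.
Qed.

Lemma step_ineq (u0 q th D g g' Hs H1 Hs1 X1 Xs1 T K x be : R) :
  0 <= q <= 1 -> 0 <= th <= 1 -> 0 <= D -> 3 * D <= (1 - th) * be ->
  D <= th * g - g' -> 0 <= x ->
  Hs + g <= u0 + q * H1 + (1 - q) * Hs1 ->
  be * ((1 - q) * (1 + x) ^+ 2) <= u0 ->
  T * g' + th * H1 - K - D * 1 ^+ 3 <= X1 ->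
  T * g' + th * Hs1 - K - D * (x + 1) ^+ 3 <= Xs1 ->
  (T + 1) * g' + th * Hs - K - D * x ^+ 3 <= u0 + q * X1 + (1 - q) * Xs1.
Proof.
move=> /andP[q0 q1] /andP[t0 t1] D0 hD1 hD2 x0 hsub hu hX1 hXs1.
have a1 : q * (T * g' + th * H1 - K - D * 1 ^+ 3) <= q * X1 by exact: ler_wpM2l.
have a2 : (1 - q) * (T * g' + th * Hs1 - K - D * (x + 1) ^+ 3) <= (1 - q) * Xs1.
  by apply: ler_wpM2l => //; lra.
have a3 : th * (Hs + g) <= th * (u0 + q * H1 + (1 - q) * Hs1) by exact: ler_wpM2l.
have a4 : (1 - th) * (be * ((1 - q) * (1 + x) ^+ 2)) <= (1 - th) * u0.
  by apply: ler_wpM2l => //; lra.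
have a5 : 0 <= ((1 - q) * (1 + x) ^+ 2) * ((1 - th) * be - 3 * D).
  apply: mulr_ge0; last lra.
  by apply: mulr_ge0; [lra|exact: sqr_ge0].
have a6 : 0 <= q * D * x ^+ 3.
  by apply: mulr_ge0; [exact: mulr_ge0|exact: exprn_ge0].
have a7 : 0 <= (1 - q) * D * (3 * x + 2).
  by apply: mulr_ge0; [apply: mulr_ge0 => //; lra|lra].
have a8 : 0 <= (1 - q) * D by apply: mulr_ge0 => //; lra.
nra.
Qed.

Lemma LB (pi : policy R N) (hpi : valid_policy pi) (h : nat -> R) (g g' th D K : R) :
  0 <= th <= 1 -> 0 <= D -> 3 * D <= (1 - th) * (beta * eps) ->
  D <= th * g - g' ->
  (forall s a, h s + g <= u s a + Q a * h 1%N + (1 - Q a) * h s.+1) ->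
  (forall s, th * h s <= K + D * s%:R ^+ 3) ->
  forall T hist s, T%:R * g' + th * h s - K - D * s%:R ^+ 3 <= ec pi T hist s.
Proof.
case: hpi => pi0 pi1 hth hD hD1 hD2 hsub hbase.
elim => [|T IH] hist s /=.
  by rewrite mul0r add0r; have := hbase s; lra.
set RHS := _ - _.
have -> : RHS = \sum_(a : action N) pi hist s a * RHS.
  by rewrite -mulr_suml pi1 mul1r.
apply: ler_sum => a _; apply: ler_wpM2l; first exact: pi0.
rewrite /RHS -natr1.
apply: (@step_ineq (u s a) (Q a) th D g g' (h s) (h 1%N) (h s.+1) _ _ T%:R K s%:R (beta * eps));
  [by rewrite Q_ge0 Q_le1 | exact: hth | exact: hD | exact: hD1 | exact: hD2 | by []
  | exact: hsub | exact: u_lb | exact: IH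
  | by have := IH (rcons hist (s, a)) s.+1; rewrite -natr1].
Qed.

Lemma cube_bound (B D x : R) : 0 <= B -> 0 < D -> 0 <= x ->
  B * x ^+ 2 <= D * x ^+ 3 + B ^+ 3 / D ^+ 2.
Proof.
move=> B0 D0 x0; case: (lerP x (B / D)) => hx.
  have hx2 : x ^+ 2 <= (B / D) ^+ 2 by rewrite ler_sqr ?nnegrE // divr_ge0 // ltW.
  have : B * x ^+ 2 <= B * (B / D) ^+ 2 by exact: ler_wpM2l.
  have -> : B * (B / D) ^+ 2 = B ^+ 3 / D ^+ 2 by field; rewrite gt_eqF.
  have : 0 <= D * x ^+ 3 by apply: mulr_ge0; [exact: ltW|exact: exprn_ge0].
  have : 0 <= B ^+ 3 / D ^+ 2.
    by apply: divr_ge0; [exact: exprn_ge0|exact: exprn_ge0 (ltW D0)].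
  lra.
have hB : B < D * x by move: hx; rewrite ltr_pdivrMr // mulrC.
have : B * x ^+ 2 <= D * x * x ^+ 2 by apply: ler_wpM2r; [exact: exprn_ge0|exact: ltW].
have : 0 <= B ^+ 3 / D ^+ 2.
  by apply: divr_ge0; [exact: exprn_ge0|exact: exprn_ge0 (ltW D0)].
rewrite -mulrA -exprS. lra.
Qed.

Lemma phi_opt : optimal p c r beta eps phi.
Proof.
move=> pi hpi.
have V0le : Vs 0 <= 0 by rewrite -Vs1; exact: Vs_mono.
apply: (@le_trans _ _ gs%:E).
  rewrite /avg_cost; apply: (@esup_le _ _ gs (- Vs 0%N)); first by rewrite oppr_ge0.
  move=> n n0; rewrite ler_pdivrMr ?ltr0n //.
  have hk : forall s, u s (phi s) + Q (phi s) * Vs 1%N + (1 - Q (phi s)) * Vs s.+1 <= Vs s + gs.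
    by move=> s; rewrite Vs1 mulr0 addr0 [X in _ <= X + _]acoeE; lra.
  have := UB hk Vs_ge n [::] 1%N.
  rewrite Vs1 mulrDl divfK ?gt_eqF ?ltr0n // mulrC; lra.
rewrite /avg_cost; apply/lee_subgt0Pr => e e0; rewrite -EFinB.
set g' := gs - e.
have gse : 0 < gs + e by have := gs_ge0; lra.
set th := gs / (gs + e).
have th0 : 0 <= th by apply: divr_ge0; [exact: gs_ge0|exact: ltW].
have th1 : 1 - th = e / (gs + e) by rewrite /th; field; rewrite gt_eqF.
have th1' : 0 < 1 - th by rewrite th1 divr_gt0.
have thg : th * gs - g' = e ^+ 2 / (gs + e) by rewrite /th /g'; field; rewrite gt_eqF.
have thg' : 0 < th * gs - g' by rewrite thg divr_gt0 // exprn_gt0.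
set a := (1 - th) * (beta * eps) / 3.
have a0 : 0 < a by rewrite /a divr_gt0 // mulr_gt0 // be_gt0.
set D := if a <= th * gs - g' then a else th * gs - g'.
have D0 : 0 < D by rewrite /D; case: ifP.
have D1 : 3 * D <= (1 - th) * (beta * eps).
  have : D <= a by rewrite /D; case: ifP => // /negbT; rewrite -ltNge => /ltW.
  rewrite /a; lra.
have D2 : D <= th * gs - g' by rewrite /D; case: ifP.
set Bq := xc + yc.
set K := `|zc gs| + Bq ^+ 3 / D ^+ 2.
have hbase : forall s, th * Vs s <= K + D * s%:R ^+ 3.
  move=> s.
  have h1 : Vs s <= Bq * s%:R ^+ 2 + zc gs by exact: le_trans (V_le_tail gs s) (tail_le gs s).
  have h2 := @cube_bound Bq D s%:R (addr_ge0 xc_ge0 yc_ge0) D0 (ler0n _ _).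
  have h3 : zc gs <= `|zc gs| by exact: ler_norm.
  have h4 : 0 <= Bq ^+ 3 / D ^+ 2 by apply: divr_ge0; apply: exprn_ge0; [exact: addr_ge0 xc_ge0 yc_ge0|exact: ltW].
  have h5 : 0 <= D * s%:R ^+ 3 by apply: mulr_ge0; [exact: ltW|exact: exprn_ge0].
  have h6 : 0 <= `|zc gs| by [].
  case: (lerP 0 (Vs s)) => hv.
    have : th * Vs s <= Vs s.
      rewrite -[X in _ <= X]mul1r; apply: ler_wpM2r => //; lra.
    rewrite /K; lra.
  have : th * Vs s <= 0 by apply: mulr_ge0_le0 => //; exact: ltW.
  rewrite /K; lra.
have hsub : forall s a, Vs s + gs <= u s a + Q a * Vs 1%N + (1 - Q a) * Vs s.+1.
  by move=> s a'; rewrite Vs1 mulr0 addr0; have := acoeI s a'; lra.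
have hth : 0 <= th <= 1 by apply/andP; split => //; lra.
apply: (@esup_ge _ _ g' (K + D)).
  by apply: addr_ge0; [rewrite /K; apply: addr_ge0 => //; apply: divr_ge0; apply: exprn_ge0;
     [exact: addr_ge0 xc_ge0 yc_ge0|exact: ltW]|exact: ltW].
move=> n n0.
have := LB hpi hth (ltW D0) D1 D2 hsub hbase n [::] 1%N.
rewrite Vs1 mulr0 addr0 expr1n mulr1 => h.
rewrite ler_pdivlMr ?ltr0n // mulrBl divfK ?gt_eqF ?ltr0n // mulrC; lra.
Qed.

Lemma main : exists (phi0 : nat -> action N) (K : nat) (b : nat -> action N) (theta : nat -> nat),
    [/\ threshold_type phi0 K b theta,
        (forall k, (1 <= k < K)%N -> Qa r p (b k) <= Qa r p (b k.+1)) &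
        optimal p c r beta eps phi0].
Proof.
have hc' : forall s, (Mb <= s)%N -> phi s = phi Mb by exact: phi_const.
have [K [b [theta [ht _ _ hp']]]] := @thresh_gen N (Num.truncn ((lam0 + G / Q full) / (beta * eps))) phi hc'.
exists phi, K, b, theta; split => //; last exact: phi_opt.
move=> k hk; have [s [s' [_ hss _ -> ->]]] := hp' k hk.
by rewrite !Qswap; apply: phiQ_mono; exact: ltnW.
Qed.
End Basic.

Theorem proposition1 (R : realType) (N : nat) (p c r : 'I_N -> R) (beta eps : R) :
  (0 < N)%N ->
  (forall n, 0 < p n <= 1) ->
  (forall n, 0 <= c n) ->
  (forall n, 0 < r n <= 1) ->
  0 < beta < 1 ->
  0 < eps ->
  exists (phi : nat -> action N) (K : nat) (b : nat -> action N) (theta : nat -> nat),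
    [/\ threshold_type phi K b theta,
        (forall k, (1 <= k < K)%N -> Qa r p (b k) <= Qa r p (b k.+1)) &
        optimal p c r beta eps phi].
Proof.
move=> N0 hp hc hr hb he.
by apply: main.
Qed.
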